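(* Let $P \geq 3$ be an integer and $p = P!/2!$, and let $N$ be the number of positive integers $d$ such that $d(d+1)$ divides $P!$. Then for each such $d$ the three numbers $-p - 2p\left(d + \frac{1}{d}\right)$, $p + 2p\left(d + \frac{1}{d+1}\right)$, $p + 2p\left(\frac{1}{d} + \frac{d}{d+1}\right)$ are integers and $$\left\{-p - 2p\left(d + \frac{1}{d}\right)\right\}^3 + \left\{p + 2p\left(d + \frac{1}{d+1}\right)\right\}^3 + \left\{p + 2p\left(\frac{1}{d} + \frac{d}{d+1}\right)\right\}^3 = 3p^3 = 3\left(\frac{P!}{2!}\right)^3,$$ and the $N$ values of $d$ yield $N$ distinct sets of three cubes representing $3(P!/2!)^3$. Moreover, if $P \geq 5$, then $N \geq P$, so $3(P!/2!)^3$ is represented by at least $P$ distinct sets of three integer cubes. *)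

(* Defs.v *)
From mathcomp Require Import all_boot all_order all_algebra.
Set Implicit Arguments. Unset Strict Implicit. Unset Printing Implicit Defensive.
Import Order.TTheory GRing.Theory Num.Theory.
Local Open Scope ring_scope.

Definition pval (P : nat) : rat := (P`!)%:R / (2`!)%:R.

Definition xA (P d : nat) : rat :=
  - pval P - 2 * pval P * (d%:R + 1 / d%:R).
Definition xB (P d : nat) : rat :=
  pval P + 2 * pval P * (d%:R + 1 / (d.+1)%:R).
Definition xC (P d : nat) : rat :=
  pval P + 2 * pval P * (1 / d%:R + d%:R / (d.+1)%:R).

Definition admissible (P d : nat) : bool := (0 < d)%N && (d * d.+1 %| P`!)%N.

(* N = number of positive d with d(d+1) | P!; such d satisfy d <= P!, so
   counting over 1..P! counts all of them. *)
Definition Ncount (P : nat) : nat := count (admissible P) (iota 1 P`!).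

Definition is_int (x : rat) : Prop := exists z : int, x = z%:~R.

(* Main.v *)
Require Import Defs.
From mathcomp Require Import all_boot all_order all_algebra.
From mathcomp Require Import ring lra zify.
Import Order.TTheory GRing.Theory Num.Theory.
Local Open Scope ring_scope.

Lemma fact_dvd (m n : nat) : (m <= n)%N -> (m`! %| n`!)%N.
Proof.
move=> /subnKC <-; elim: (n - m)%N => [|k IH]; first by rewrite addn0.
by rewrite addnS factS dvdn_mull.
Qed.
Arguments fact_dvd {m n}.

Lemma pvalE (P a : nat) : P`! = (a * 2)%N -> pval P = a%:R.
Proof. by move=> e; rewrite /pval e natrM mulfK. Qed.

Lemma pval_gt0 P : 0 < pval P.
Proof. by rewrite /pval divr_gt0 // ltr0n fact_gt0. Qed.

Lemma natz_cast (n : nat) : (n%:Z)%:~R = n%:R :> rat.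
Proof. by rewrite -pmulrn. Qed.

Lemma part1 P d : (3 <= P)%N -> admissible P d ->
     [/\ is_int (xA P d), is_int (xB P d), is_int (xC P d) &
         xA P d ^+ 3 + xB P d ^+ 3 + xC P d ^+ 3 = 3 * pval P ^+ 3].
Proof.
move=> hP /andP[d0 hd].
have h2 : (2 %| P`!)%N by apply: dvdn_fact; lia.
have hdd : (d %| P`!)%N by apply: dvdn_trans hd; apply: dvdn_mulr.
have hd1 : (d.+1 %| P`!)%N by apply: dvdn_trans hd; apply: dvdn_mull.
case/dvdnP: h2 => a ea; case/dvdnP: hdd => b eb; case/dvdnP: hd1 => c ec.
have pa := @pvalE P a ea.
set F := P`! in ea eb ec.
have dn0 : d%:R != 0 :> rat by rewrite pnatr_eq0 -lt0n.
have d1n0 : d.+1%:R != 0 :> rat by rewrite pnatr_eq0.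
have d1a : 1 + d%:R != 0 :> rat by rewrite addrC natr1.
have d1b : d%:R + 1 != 0 :> rat by rewrite natr1.
have ha : a%:R = F%:R / 2 :> rat by rewrite ea natrM mulfK.
have hb : b%:R = F%:R / d%:R :> rat by rewrite eb natrM mulfK.
have hc : c%:R = F%:R / d.+1%:R :> rat by rewrite ec natrM mulfK.
split.
- exists (- (a + a * 2 * d + b)%N%:Z).
  rewrite intrN natz_cast /xA pa !natrD !natrM ha hb; field; by rewrite ?dn0 ?d1a ?d1b.
- exists ((a + a * 2 * d + c)%N%:Z).
  rewrite natz_cast /xB pa !natrD !natrM ha hc; field; by rewrite ?dn0 ?d1a ?d1b.
- exists ((a + b + c * d)%N%:Z).
  rewrite natz_cast /xC pa !natrD !natrM ha hb hc; field; by rewrite ?dn0 ?d1a ?d1b.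
rewrite /xA /xB /xC -[d.+1%:R]natr1.
field; by rewrite ?dn0 ?d1a ?d1b.
Qed.

Lemma xA_neg P d : (0 < d)%N -> xA P d < 0.
Proof.
move=> d0; rewrite /xA.
have hp := pval_gt0 P.
have hs : 0 < d%:R + 1 / d%:R :> rat.
  by rewrite addr_gt0 // ?ltr0n // divr_gt0 // ltr0n.
have := mulr_gt0 hp hs; lra.
Qed.

Lemma xB_pos P d : 0 < xB P d.
Proof.
rewrite /xB; have hp := pval_gt0 P.
have hs : 0 < d%:R + 1 / d.+1%:R :> rat.
  by rewrite ltr_wpDl // ?ler0n // divr_gt0 // ltr0n.
have := mulr_gt0 hp hs; move: hs; set s := (_ + _ / _); move: s (pval P) hp => s p hp *; lra.
Qed.

Lemma xC_pos P d : (0 < d)%N -> 0 < xC P d.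
Proof.
move=> d0; rewrite /xC; have hp := pval_gt0 P.
have hs : 0 < 1 / d%:R + d%:R / d.+1%:R :> rat.
  by rewrite ltr_pwDl // ?divr_ge0 ?ler0n // divr_gt0 // ltr0n.
have := mulr_gt0 hp hs; move: hs; set s := (_ + _ / _); move: s (pval P) hp => s p hp *; lra.
Qed.

Lemma cube_neg (x : rat) : x < 0 -> x ^+ 3 < 0.
Proof.
move=> hx; have : 0 < (- x) ^+ 3 by rewrite exprn_gt0 // oppr_gt0.
rewrite (_ : (- x) ^+ 3 = - x ^+ 3); last by ring.
rewrite oppr_gt0 //.
Qed.

Lemma cube_inj_neg (u v : rat) : u < 0 -> v < 0 -> u ^+ 3 = v ^+ 3 -> u = v.
Proof.
move=> hu hv e; apply: oppr_inj; apply/eqP.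
rewrite -(eqrXn2 (n:=3)) // ?oppr_ge0 ?ltW //.
by rewrite !(_ : forall w : rat, (- w) ^+ 3 = - w ^+ 3) ?e // => w; ring.
Qed.

Lemma cube_pos (x : rat) : 0 < x -> 0 < x ^+ 3.
Proof. by move=> hx; rewrite exprn_gt0. Qed.

Lemma part2 P d1 d2 : admissible P d1 -> admissible P d2 -> d1 <> d2 ->
     ~ ([:: xA P d1 ^+ 3; xB P d1 ^+ 3; xC P d1 ^+ 3]
        =i [:: xA P d2 ^+ 3; xB P d2 ^+ 3; xC P d2 ^+ 3]).
Proof.
move=> /andP[h1 _] /andP[h2 _] hne heq.
have := heq (xA P d1 ^+ 3); rewrite mem_head => /esym.
rewrite !inE => /or3P[/eqP e|/eqP e|/eqP e].
- have e2 : - xA P d1 = - xA P d2.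
    by congr (- _); apply: cube_inj_neg e; apply: xA_neg.
  move/oppr_inj: e2; rewrite /xA => e2.
  have hp := pval_gt0 P.
  have hs : d1%:R + 1 / d1%:R = d2%:R + 1 / d2%:R :> rat.
    have hp2 : 2 * pval P != 0 by rewrite mulf_neq0 // gt_eqF.
    apply: (mulfI hp2); move: e2; rewrite !mulrA; lra.
  have n1 : d1%:R != 0 :> rat by rewrite pnatr_eq0 -lt0n.
  have n2 : d2%:R != 0 :> rat by rewrite pnatr_eq0 -lt0n.
  have : (d1%:R - d2%:R) * (d1%:R * d2%:R - 1) = 0 :> rat.
    have -> : (d1%:R - d2%:R) * (d1%:R * d2%:R - 1) =
      d1%:R * d2%:R * ((d1%:R + 1 / d1%:R) - (d2%:R + 1 / d2%:R)) :> rat.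
      by field; rewrite n1 n2.
    by rewrite hs subrr mulr0.
  move/eqP; rewrite mulf_eq0 => /orP[|].
  + by rewrite subr_eq0 eqr_nat => /eqP.
  + rewrite subr_eq0 -natrM (eqr_nat _ _ 1) muln_eq1 => /andP[/eqP a /eqP b].
    by apply: hne; rewrite a b.
- have n := cube_neg _ (xA_neg P d1 h1); have q := cube_pos _ (xB_pos P d2).
  by rewrite e in n; have := lt_trans q n; rewrite ltxx.
- have n := cube_neg _ (xA_neg P d1 h1); have q := cube_pos _ (xC_pos P d2 h2).
  by rewrite e in n; have := lt_trans q n; rewrite ltxx.
Qed.

Lemma adm_small P d : (0 < d)%N -> (d < P)%N -> admissible P d.
Proof.
move=> d0 dP; rewrite /admissible d0 /=.
apply: (dvdn_trans _ (fact_dvd dP)).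
rewrite factS mulnC; apply: dvdn_mul => //.
by case: d d0 {dP} => // d _; rewrite factS dvdn_mulr.
Qed.

Lemma adm_big P : (5 <= P)%N -> exists d, (P <= d)%N && admissible P d.
Proof.
move=> hP; case: (ltnP P 6) => hP6.
  have -> : P = 5%N by lia.
  by exists 5%N.
set m := P./2.
have hm : (3 <= m)%N by rewrite /m; case/boolP: (odd P) => ho; have := odd_double_half P; lia.
have h2m : (m.*2 <= P)%N by rewrite /m; have := odd_double_half P; lia.
exists (m * m - 1)%N; apply/andP; split.
  have := odd_double_half P; rewrite -/m => e; nia.
rewrite /admissible; apply/andP; split; first by nia.
apply: (dvdn_trans _ (fact_dvd h2m)).
have e1 : (m.*2 = (m.*2).-1.+1)%N by lia.
rewrite e1 factS -e1.
have hmm : (m.+1 <= (m.*2).-1)%N by lia.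
have hf := fact_dvd hmm.
have : ((m-1) * m * m.+1 %| m.+1`!)%N.
  have e2 : m = (m - 2).+2 by lia.
  rewrite e2 !factS. rewrite -e2.
  have e3 : ((m - 2).+1 = m - 1)%N by lia.
  rewrite e3 [X in (_ %| X)%N]mulnA [X in (_ %| X)%N]mulnA.
  have -> : ((m - 1) * m * m.+1 = m.+1 * m * (m - 1))%N by ring.
  exact: dvdn_mulr.
move=> h3.
apply: (@dvdn_trans (m.*2 * ((m - 1) * m * m.+1))).
  apply/dvdnP; exists 2%N.
  have e4 : (m * m - 1).+1 = (m * m)%N by nia.
  rewrite e4.
  have e5 : (m * m - 1 = (m - 1) * m.+1)%N.
    rewrite mulnBl mul1n mulnS; nia.
  rewrite e5 -!muln2 ; ring.
by apply: dvdn_mul => //; apply: dvdn_trans h3 hf.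
Qed.

Theorem lemma3p4 (P : nat) (hP : (3 <= P)%N) :
  (forall d : nat, admissible P d ->
     [/\ is_int (xA P d), is_int (xB P d), is_int (xC P d) &
         xA P d ^+ 3 + xB P d ^+ 3 + xC P d ^+ 3 = 3 * pval P ^+ 3]) /\
  (forall d1 d2 : nat, admissible P d1 -> admissible P d2 -> d1 <> d2 ->
     ~ ([:: xA P d1 ^+ 3; xB P d1 ^+ 3; xC P d1 ^+ 3]
        =i [:: xA P d2 ^+ 3; xB P d2 ^+ 3; xC P d2 ^+ 3])) /\
  ((5 <= P)%N -> (P <= Ncount P)%N).
Proof.
split; first by move=> d; apply: part1.
split; first exact: part2.
move=> h5; case: (adm_big P h5) => d0 /andP[hd0 ad0].
have hle : (d0 <= P`!)%N.
  move: ad0 => /andP[_ h]; apply: leq_trans (dvdn_leq (fact_gt0 _) h); nia.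
suff H : (size (d0 :: iota 1 P.-1) <= size (filter (admissible P) (iota 1 P`!)))%N.
  by move: H; rewrite /= size_iota size_filter /Ncount; lia.
apply: uniq_leq_size.
- rewrite /= iota_uniq andbT mem_iota; apply/negP => /andP[_]; lia.
- move=> x; rewrite inE mem_filter => /orP[/eqP ->|].
    rewrite ad0 mem_iota /=; move: ad0 => /andP[h _]; lia.
  rewrite mem_iota => /andP[x1 x2].
  rewrite adm_small //; last by lia.
  rewrite mem_iota x1 /=.
  have : (P < P`!)%N.
    case: P hP {h5 hd0 ad0 hle x2} => // n hn; rewrite factS.
    have := fact_geq n; nia.
  lia.
Qed.
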